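(* Let $\mathbb{D}$ be a division ring with $\operatorname{char}\mathbb{D}\ne 2,3$, let $n\ge 1$, and let $C\in M_n(\mathbb{D})$. Let $\mathbb{D}^n$ denote the space of column vectors $x=(x_1,\dots,x_n)^T$ with entries in $\mathbb{D}$. If for all $a,b\in\mathbb{D}^n$, $a^Tb=0$ implies $a^TCb=0$, then $C=\lambda I$ for some $\lambda\in\mathbb{D}$. *)

(* Defs.v *)
From HB Require Import structures.
From mathcomp Require Import all_boot all_order all_algebra.
Set Implicit Arguments. Unset Strict Implicit. Unset Printing Implicit Defensive.
Import GRing.Theory.
Local Open Scope ring_scope.

Definition is_division_ring (D : unitRingType) : Prop :=
  forall x : D, x != 0 -> x \is a GRing.unit.

(* Main.v *)
Require Import Defs.
From mathcomp Require Import all_boot all_order all_algebra.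
Local Open Scope ring_scope.
Import GRing.Theory.

Lemma key3p2 (D : unitRingType) n (A : 'M[D]_n) i j :
  (delta_mx i (0 : 'I_1))^T *m A *m delta_mx j (0 : 'I_1) = (A i j)%:M :> 'M_1.
Proof.
by apply/matrixP => x y; rewrite !ord1 trmx_delta -rowE -colE !mxE eqxx mulr1n.
Qed.

Lemma key3p2' (D : unitRingType) n (i j : 'I_n) :
  (delta_mx i (0 : 'I_1))^T *m delta_mx j (0 : 'I_1) = ((i == j)%:R : D)%:M :> 'M_1.
Proof.
by rewrite -[X in X *m _]mulmx1 key3p2 mxE.
Qed.

Theorem lemma3p2 (D : unitRingType) (hD : is_division_ring D)
  (h2 : (2%:R : D) != 0) (h3 : (3%:R : D) != 0)
  (n : nat) (hn : (0 < n)%N) (C : 'M[D]_n) :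
  (forall a b : 'cV[D]_n, a^T *m b = 0 -> a^T *m C *m b = 0) ->
  exists lambda : D, C = lambda%:M.
Proof.
move=> H; case: n hn C H => // n _ C H.
set e := fun i : 'I_n.+1 => delta_mx i (0 : 'I_1) : 'cV[D]_n.+1.
have Hoff : forall i j, i != j -> C i j = 0.
  move=> i j ij; have := H (e i) (e j); rewrite key3p2 key3p2' (negbTE ij) /=.
  move=> /(_ (raddf0 _))/(congr1 (fun M : 'M_1 => M 0 0)).
  by rewrite !mxE eqxx mulr1n.
exists (C 0 0); apply/matrixP => i j; rewrite mxE.
have [<-|ij] := eqVneq i j; last by rewrite Hoff // mulr0n.
rewrite ?eqxx mulr1n.
have [->//|i0] := eqVneq i 0.
have := H (e i + e 0) (e i - e 0).
rewrite !linearD /= ?mulmxDl ?mulmxBr ?mulmxDr ?mulmxBl ?mulmxDl ?mulmxBr !key3p2 !key3p2'.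
rewrite (negbTE i0) eq_sym (negbTE i0) /=.
have P : (1%:M - 0%:M + (0%:M - 1%:M) : 'M[D]_1) = 0.
  by apply/matrixP => x y; rewrite !mxE; case: (x == y); rewrite ?mulr1n ?mulr0n ?subr0 ?sub0r ?subrr ?oppr0 ?addr0.
rewrite eqxx; move=> /(_ P)/(congr1 (fun M : 'M_1 => M 0 0)).
rewrite !mxE !mulr1n (Hoff i 0) // (Hoff 0 i) 1?eq_sym // subr0 sub0r.
by move/eqP; rewrite subr_eq0 => /eqP.
Qed.
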